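(* Let $\lambda$ be a prime number, $\mathsf{R}$ a commutative ring and $f=\sum_{k=1}^t a_k\mathbf{x}^{\mathbf{e}_k}\in\mathsf{R}[x_1,\ldots,x_n]$, and suppose that a fixed term of $f$ avoids collision in the image $f(z^{s_1},\ldots,z^{s_n})$ for a uniformly random $\mathbf{s}\in\{0,\ldots,\lambda-1\}^n$ with probability at least $3/4$. Let $\mathbf{r}_1,\ldots,\mathbf{r}_{2n}$ be row vectors chosen independently and uniformly at random from $\{0,\ldots,\lambda-1\}^n$, and let $Q$ be the $2n\times n$ matrix with rows $\mathbf{r}_1,\ldots,\mathbf{r}_{2n}$. Then, conditioned on the event that this term of $f$ avoids collision in all of the images $f(z^{r_{i1}},\ldots,z^{r_{in}})$ for $1\le i\le 2n$, the matrix $Q$ has rank less than $n$ with probability at most $(9\lambda/16)^{-n}$.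
   Context: The $a_k$ are nonzero and the exponent vectors $\mathbf{e}_k\in\mathbb{Z}_{\ge0}^n$ pairwise distinct. The $i$th term of $f$ avoids collision under $\mathbf{s}$ if $\mathbf{e}_i\cdot\mathbf{s}\ne\mathbf{e}_j\cdot\mathbf{s}$ for all $j\ne i$. *)

(* Defs.v *)
From HB Require Import structures.
From mathcomp Require Import all_boot all_order all_algebra.
From mathcomp Require Import mpoly.
Set Implicit Arguments. Unset Strict Implicit. Unset Printing Implicit Defensive.
Import Order.TTheory GRing.Theory Num.Theory.
Local Open Scope ring_scope.

(* e . s, the exponent of z in x^e evaluated at x_i := z^(s_i). *)
Definition dotexp (n lam : nat) (e : 'X_{1..n}) (s : {ffun 'I_n -> 'I_lam}) : nat :=
  (\sum_(i < n) e i * s i)%N.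

Definition avoids_collision (R : comNzRingType) (n lam : nat) (f : {mpoly R[n]})
    (e : 'X_{1..n}) (s : {ffun 'I_n -> 'I_lam}) : bool :=
  all (fun e' => (e' != e) ==> (dotexp e' s != dotexp e s)) (msupp f).

Definition rowsmx (n lam : nat) (Q : {ffun 'I_(2 * n) -> {ffun 'I_n -> 'I_lam}}) :
    'M['F_lam]_(2 * n, n) :=
  \matrix_(i < 2 * n, j < n) ((Q i j : nat)%:R : 'F_lam).

(* Main.v *)
Require Import Defs.
From HB Require Import structures.
From mathcomp Require Import all_boot all_order all_algebra.
From mathcomp Require Import mpoly.
Import Order.TTheory GRing.Theory Num.Theory.
Set Implicit Arguments. Unset Strict Implicit.
Local Open Scope ring_scope.

Lemma Fp_nat_inj (p : nat) (k l : 'I_p) : prime p ->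
  ((k : nat)%:R : 'F_p) = (l : nat)%:R -> k = l.
Proof.
move=> pp h; apply: val_inj => /=.
have := val_Fp_nat pp k; have := val_Fp_nat pp l; rewrite h => -> .
by rewrite !modn_small.
Qed.

Definition Aset (p n : nat) (u : 'rV['F_p]_n) : {set {ffun 'I_n -> 'I_p}} :=
  [set r : {ffun 'I_n -> 'I_p} | \sum_j u 0 j * ((r j : nat)%:R : 'F_p) == 0].

Arguments Aset {p n}.
Lemma A_bound (p n : nat) (u : 'rV['F_p]_n) (j0 : 'I_n) : prime p ->
  u 0 j0 != 0 -> (#|Aset u| * p <= p ^ n)%N.
Proof.
move=> pp uj0.
pose h (x : {ffun 'I_n -> 'I_p} * 'I_p) : {ffun 'I_n -> 'I_p} :=
  [ffun j => if j == j0 then x.2 else x.1 j].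
have hinj : {in setX (Aset u) setT &, injective h}.
  move=> [r k] [r' k']; rewrite !inE /= !andbT => Ar Ar' /ffunP hE.
  have kk : k = k' by move: (hE j0); rewrite !ffunE eqxx.
  have oth : forall j, j != j0 -> r j = r' j.
    by move=> j /negbTE nj; move: (hE j); rewrite !ffunE nj.
  suff rr : r = r' by rewrite rr kk.
  apply/ffunP => j; case: (eqVneq j j0) => [->|/oth //].
idtac.
  move: Ar Ar' => /eqP H1 /eqP H2.
  rewrite (bigD1 j0) //= in H1; rewrite (bigD1 j0) //= in H2.
  rewrite (eq_bigr (fun j => u 0 j * ((r' j : nat)%:R : 'F_p))) in H1; last first.
    by move=> i ni; rewrite oth.
  apply: (Fp_nat_inj pp); apply: (mulfI uj0).
  by apply: (addIr (\sum_(i < n | i != j0) u 0 i * ((r' i : nat)%:R))); rewrite H1 H2.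
have := card_in_imset hinj.
rewrite cardsX cardsT card_ord => <-.
by apply: leq_trans (max_card _) _; rewrite card_ffun !card_ord.
Qed.

Lemma kernel_vec (p m n : nat) (A : 'M['F_p]_(m, n)) : (\rank A < n)%N ->
  exists2 u : 'rV['F_p]_n, u != 0 & u *m A^T == 0.
Proof.
move=> rk.
set K := kermx A^T.
have : \rank K != 0%N by rewrite mxrank_ker mxrank_tr subn_eq0 -ltnNge.
rewrite mxrank_eq0 => /eqP Kn0.
have [i ui] : exists i, row i K != 0.
  case: (pickP (fun i => row i K != 0)) => [i ui|H]; first by exists i.
  exfalso; apply: Kn0; apply/row_matrixP => i; rewrite row0; apply/eqP.
  by move: (H i) => /= /negbFE.
exists (row i K) => //.
by rewrite -sub_kermx row_sub.
Qed.

Lemma count_cover (T I : finType) (P : pred T) (C : pred I) (Qu : I -> pred T) :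
  (forall x, P x -> exists2 u, C u & Qu u x) ->
  (#|[set x | P x]| <= \sum_(u | C u) #|[set x | Qu u x]|)%N.
Proof.
move=> H.
have E (Z : pred T) : #|[set x | Z x]| = (\sum_x (Z x : nat))%N.
  by rewrite -sum1_card big_mkcond /=; apply: eq_bigr => x _; rewrite inE; case: (Z x).
rewrite E (eq_bigr _ (fun u _ => E (Qu u))) exchange_big /= leq_sum // => x _.
case Px: (P x) => //.
have [u Cu Qx] := H x Px.
by rewrite (bigD1 u) //= Qx.
Qed.

From mathcomp Require Import ring.

Lemma card_allin (T : finType) (m : nat) (A : {set T}) :
  #|[set Q : {ffun 'I_m -> T} | [forall i, Q i \in A]]| = (#|A| ^ m)%N.
Proof.
rewrite -[m in RHS]card_ord -card_ffun_on; apply: eq_card => Q.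
by rewrite inE; apply/forallP/ffun_onP.
Qed.

Lemma nz_entry (F : nzRingType) (n : nat) (u : 'rV[F]_n) : u != 0 ->
  exists j, u 0 j != 0.
Proof.
move=> un0; case: (pickP (fun j => u 0 j != 0)) => [j uj|H]; first by exists j.
exfalso; move/eqP: un0; apply; apply/rowP => j; rewrite mxE.
by move: (H j) => /= /negbFE /eqP.
Qed.

Lemma leq_expr (a b e : nat) : (a <= b)%N -> (a ^ e <= b ^ e)%N.
Proof. by case: e => [//|e] h; rewrite leq_exp2r. Qed.

Unset Implicit Arguments.
Theorem lemma5p3 (lam n : nat) (R : comNzRingType) (f : {mpoly R[n]}) (e : 'X_{1..n}) :
  prime lam ->
  e \in msupp f ->
  (3%:R / 4%:R : rat) <=
    (#|[set s : {ffun 'I_n -> 'I_lam} | avoids_collision f e s]|%:R / (lam ^ n)%N%:R) ->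
  (#|[set Q : {ffun 'I_(2 * n) -> {ffun 'I_n -> 'I_lam}} |
        [forall i, avoids_collision f e (Q i)] && (\rank (rowsmx Q) < n)%N]|%:R
     / #|[set Q : {ffun 'I_(2 * n) -> {ffun 'I_n -> 'I_lam}} |
        [forall i, avoids_collision f e (Q i)]]|%:R : rat)
  <= ((9 * lam)%N%:R / 16%:R) ^- n.
Proof.
move=> pp _ H.
set S := [set s : {ffun 'I_n -> 'I_lam} | avoids_collision f e s] in H.
set a := #|S| in H.
set N := #|_|.
set D := #|_|.
have p0 : (0 < lam)%N by rewrite prime_gt0.
have pn : (0 < lam ^ n)%N by rewrite expn_gt0 p0.
have Ha : (3 * lam ^ n <= a * 4)%N.
  move: H; rewrite ler_pdivlMr ?ltr0n // mulrAC ler_pdivrMr ?ltr0n //.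
  by rewrite -!natrM ler_nat.
have HD : D = (a ^ (2 * n))%N.
  rewrite /D -card_allin; apply: eq_card => Q; rewrite !inE.
  by apply: eq_forallb => i; rewrite inE.
have HN : (N * lam ^ (2 * n) <= lam ^ n * lam ^ (n * (2 * n)))%N.
  have N1 : (N <= \sum_(u : 'rV['F_lam]_n | u != 0%R)
      #|[set Q : {ffun 'I_(2 * n) -> {ffun 'I_n -> 'I_lam}} |
          [forall i, Q i \in Aset u]]|)%N.
    apply: (@leq_trans #|[set Q : {ffun 'I_(2 * n) -> {ffun 'I_n -> 'I_lam}} | (\rank (rowsmx Q) < n)%N]|).
      by apply: subset_leq_card; apply/subsetP => Q; rewrite !inE => /andP[_ ->].
    apply: count_cover => Q.
    move=> /(kernel_vec (p:=lam)) [u un0 /eqP uQ]; exists u => //.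
    apply/forallP => i; rewrite /Aset inE.
    have Hi : (u *m (rowsmx Q)^T) 0 i = (0 : 'M_(1, 2 * n)) 0 i by rewrite uQ.
    rewrite !mxE in Hi.
    by apply/eqP; rewrite -[RHS]Hi; apply: eq_bigr => j _; rewrite !mxE.
  apply: leq_trans (leq_mul N1 (leqnn _)) _.
  rewrite big_distrl /=.
  apply: (@leq_trans (\sum_(u : 'rV['F_lam]_n) lam ^ (n * (2 * n)))).
    rewrite big_mkcond /= leq_sum // => u _.
    case: (eqVneq u 0) => [//|un0] /=.
    have [j0 uj0] := nz_entry un0.
    rewrite card_allin -expnMn [X in (_ <= X)%N]expnM.
    by apply: leq_expr; apply: A_bound uj0.
  by rewrite sum_nat_const card_mx card_Fp // mul1n.
have D0 : (0 < D)%N.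
  rewrite HD expn_gt0; apply/orP; left.
  rewrite lt0n; apply/eqP => a0; move: Ha; rewrite a0 mul0n leqn0 muln_eq0 /=.
  by move/eqP=> h; move: pn; rewrite h.
rewrite -exprVn invf_div exprMn exprVn -!natrX.
rewrite ler_pdivrMr ?ltr0n // mulrAC ler_pdivlMr ?ltr0n ?expn_gt0 ?muln_gt0 ?p0 //.
rewrite -!natrM ler_nat.
rewrite -(@leq_pmul2r (lam ^ (2 * n))) ?expn_gt0 ?p0 //.
have e1 : ((9 * lam) ^ n = 9 ^ n * lam ^ n)%N by rewrite expnMn.
have e2 : (lam ^ (2 * n) = lam ^ n * lam ^ n)%N by rewrite mul2n -addnn expnD.
have e3 : (16 ^ n * a ^ (2 * n) = (a * 4) ^ (2 * n))%N.
  by rewrite expnMn mulnC [(4 ^ _)%N]expnM.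
have e4 : ((3 * lam ^ n) ^ (2 * n) = 9 ^ n * lam ^ (n * (2 * n)))%N.
  by rewrite expnMn [(3 ^ _)%N]expnM [(lam ^ (n * _))%N]expnM.
apply: (@leq_trans ((lam ^ n * lam ^ (n * (2 * n))) * (9 ^ n * lam ^ n))).
  have -> : (N * (9 * lam) ^ n * lam ^ (2 * n) = (N * lam ^ (2 * n)) * (9 ^ n * lam ^ n))%N.
    by rewrite e1; ring.
  by rewrite leq_mul2r HN orbT.
apply: (@leq_trans ((3 * lam ^ n) ^ (2 * n) * lam ^ (2 * n))).
  by rewrite e4 e2; apply: eq_leq; ring.
rewrite HD e3 leq_mul2r leq_expr ?orbT //.
Qed.
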